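(* Consider the one-cell system and a single particle in it (apart from particles injected from the baths). Let $\gamma$ be an admissible path and assume the particle starts at time $0$ from $\gamma(0)$ with velocity $v_0\neq0$ directed in the positive direction along $\gamma$ (i.e. along its first segment). Then, whatever the initial angular velocity of the disk, there exists a sequence of particles injected from the baths (drivers), each of which hits the disk once and leaves the cell again, such that the particle follows $\gamma$ to its end in a finite time. In particular, if $\gamma(1)\in\partial\Gamma_{\rm L}\cup\partial\Gamma_{\rm R}$, the particle leaves the cell in finite time.
   Context: Cell geometry. Let $\Gamma_{\rm box}\subset\mathbb{R}^2$ be a bounded connected closed domain such that $(x,y)\in\Gamma_{\rm box}$ implies $x\in[0,L]$. Its boundary is $\partial\Gamma_{\rm box}=\partial\Gamma_{\rm L}\cup\partial\Gamma_{\rm R}\cup\bigcup_{k=1}^b\partial\Gamma_k$, where $\partial\Gamma_{\rm L}=\{(0,y):y\in[-a,a]\}$ and $\partial\Gamma_{\rm R}=\{(L,y):y\in[-a,a]\}$ are the two ''openings'' ($a>0$), and each $\partial\Gamma_k$ is an arc of a circle $C_k$ with center $c_k$, the arcs being oriented so that $\partial\Gamma_{\rm box}$ is everywhere dispersing. In the interior of $\Gamma_{\rm box}$ lies a closed disk $D$ of center $c=(L/2,0)$ and radius $r$ with $\partial D\cap\partial\Gamma_{\rm box}=\emptyset$, and for every $z\in\partial\Gamma_{\rm box}$ the segment $[c,z]$ meets $\partial\Gamma_{\rm box}$ only at $z$. The cell is $\Gamma=\Gamma_{\rm box}\setminus D$; its corners $\partial\Gamma^*$ are the points where two boundary pieces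 meet. Dynamics. Particles move in straight lines inside $\Gamma$ and do not interact with each other. The disk has angular position $\phi$ and angular velocity $\omega$, $\dot\phi=\omega$. At $q\in\partial\Gamma$ write $v=v^{\rm n}e_{\rm n}+v^{\rm t}e_{\rm t}$ (outward normal, tangent). Rules: at the openings the particle leaves the cell; on $\partial\Gamma_{\rm box}\setminus(\partial\Gamma_{\rm L}\cup\partial\Gamma_{\rm R})$, $(v^{\rm n})'=-v^{\rm n}$, $(v^{\rm t})'=v^{\rm t}$; on $\partial D$, $(v^{\rm n})'=-v^{\rm n}$, $(v^{\rm t})'=\omega$, $\omega'=v^{\rm t}$. Heat baths. Particles may be injected at any time through $\partial\Gamma_{\rm L}$ or $\partial\Gamma_{\rm R}$ at any point and with any inward-pointing velocity. Admissible path. A curve $\gamma:[0,1]\to\Gamma$, continuous and piecewise differentiable on $(0,1)$, is admissible if: (1) it consists of finitely many straight segments meeting at $\partial\Gamma$; (2) at each meeting point on $\partial\Gamma_{\rm box}$ the incoming and outgoing angles are equal (specular reflection); (3) only $\gamma(0)$ and $\gamma(1)$ may lie in $\partial\Gamma_{\rm L}\cup\partial\Gamma_{\rm R}$; (4) $\gamma$ never meets a corner of $\partial\Gamma^*$; (5) $\gamma$ is nowhere tangent to $\partial D$. No reflection law is required at meeting points on $\partial D$. *)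

(* Defs.v *)
(* Points of the plane are pairs of reals
   (R^o * R^o, so that the product topology of MathComp-Analysis is available
   for interior / closure / connected / closed / bounded_set). *)
From HB Require Import structures.
From mathcomp Require Import all_boot all_order all_algebra.
From mathcomp Require Import all_classical all_reals all_analysis.
Import Order.TTheory GRing.Theory Num.Theory.
Set Implicit Arguments.
Unset Strict Implicit.
Unset Printing Implicit Defensive.
Local Open Scope ring_scope.
Local Open Scope classical_set_scope.

Definition pt (R : realType) := (R^o * R^o)%type.

Definition padd (R : realType) (p q : pt R) : pt R := (p.1 + q.1, p.2 + q.2).
Definition psub (R : realType) (p q : pt R) : pt R := (p.1 - q.1, p.2 - q.2).
Definition pscale (R : realType) (s : R) (p : pt R) : pt R := (s * p.1, s * p.2).
Definition dot (R : realType) (p q : pt R) : R := p.1 * q.1 + p.2 * q.2.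
Definition rot90 (R : realType) (p : pt R) : pt R := (- p.2, p.1).
Definition dist2 (R : realType) (p q : pt R) : R := dot (psub p q) (psub p q).

Definition lerp (R : realType) (p q : pt R) (s : R) : pt R :=
  padd p (pscale s (psub q p)).

Definition bdry (R : realType) (A : set (pt R)) : set (pt R) :=
  closure A `\` interior A.

Definition refl (R : realType) (nv w : pt R) : pt R :=
  psub w (pscale (2 * dot w nv / dot nv nv) nv).

Definition arc (R : realType) (c : pt R) (rho al be : R) : set (pt R) :=
  [set p | exists2 th : R, `[al, be] th &
                           p = padd c (pscale rho (cos th, sin th))].

Record cell (R : realType) := Cell {
  box : set (pt R);
  cL : R;
  ca : R;
  nb : nat;
  cen : nat -> pt R;
  rad : nat -> R;
  alpha : nat -> R;
  beta : nat -> R;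
  rD : R
}.

Section CellDefs.
Variables (R : realType) (C : cell R).

Definition openL : set (pt R) :=
  [set p | p.1 = 0 /\ - ca C <= p.2 <= ca C].
Definition openR : set (pt R) :=
  [set p | p.1 = cL C /\ - ca C <= p.2 <= ca C].
Definition opening : set (pt R) := openL `|` openR.

Definition arck (k : nat) : set (pt R) :=
  arc (cen C k) (rad C k) (alpha C k) (beta C k).

Definition walls : set (pt R) := [set p | exists2 k, (k < nb C)%N & arck k p].

Definition dcen : pt R := (cL C / 2, 0).
Definition diskD : set (pt R) := [set p | dist2 p dcen <= rD C ^+ 2].
Definition circD : set (pt R) := [set p | dist2 p dcen = rD C ^+ 2].

Definition Gam : set (pt R) := box C `&` [set p | rD C ^+ 2 <= dist2 p dcen].
Definition bdGam : set (pt R) := bdry (box C) `|` circD.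
Definition intGam : set (pt R) := Gam `\` bdGam.

Definition corner : set (pt R) :=
  [set z | (openL z /\ walls z) \/ (openR z /\ walls z) \/ (openL z /\ openR z)
        \/ exists j k, [/\ (j < nb C)%N, (k < nb C)%N, j <> k, arck j z & arck k z]].

Definition cell_ok : Prop :=
  [/\ 0 < ca C /\ 0 < rD C,
      [/\ bounded_set (box C), connected (box C), closed (box C)
        & box C !=set0],
      (forall p, box C p -> 0 <= p.1 <= cL C) /\
      (forall p, bdry (box C) p <-> opening p \/ walls p),
      (
      (forall k, (k < nb C)%N ->
         [/\ 0 < rad C k, alpha C k < beta C k & beta C k <= alpha C k + 2 * pi]) /\
      (* dispersing: near every (relatively interior) point of dGamma_k the domain
         lies outside the open disk bounded by C_k *)
      (forall k th, (k < nb C)%N -> alpha C k < th < beta C k ->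
         exists2 eps : R, 0 < eps &
           forall p, box C p ->
             dist2 p (padd (cen C k) (pscale (rad C k) (cos th, sin th))) < eps ->
             rad C k ^+ 2 <= dist2 p (cen C k))) &
      [/\
          diskD `<=` interior (box C),
          circD `&` bdry (box C) = set0 &
          (forall z s, bdry (box C) z -> 0 <= s <= 1 ->
             bdry (box C) (lerp dcen z s) -> lerp dcen z s = z)]].

(* Admissible paths: gamma is given by its vertices P 0, ..., P n       *)
(* (gamma(0) = P 0, gamma(1) = P n), n >= 1 segments [P j, P (j+1)].     *)

Definition admissible (n : nat) (P : nat -> pt R) : Prop :=
  [/\ (0 < n)%N /\
      (forall j, (j <= n)%N -> Gam (P j)),
      (forall j, (j < n)%N -> P j <> P j.+1 /\
         forall s, 0 < s < 1 -> intGam (lerp (P j) (P j.+1) s)),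
      (forall j, (0 < j < n)%N -> bdGam (P j)) /\
      (forall j, (0 < j < n)%N -> bdry (box C) (P j) ->
         forall k, (k < nb C)%N -> arck k (P j) ->
         exists2 lam : R, 0 < lam &
           psub (P j.+1) (P j) = pscale lam (refl (psub (P j) (cen C k))
                                                 (psub (P j) (P j.-1)))),
      (forall j, (0 < j < n)%N -> ~ opening (P j)) /\
      (forall j, (j <= n)%N -> ~ corner (P j)) &
      (forall j, (j <= n)%N -> circD (P j) ->
         ((j < n)%N -> dot (psub (P j.+1) (P j)) (psub (P j) dcen) != 0) /\
         ((0 < j)%N -> dot (psub (P j) (P j.-1)) (psub (P j) dcen) != 0))].

(* A particle trajectory: nodes k = 0..tm, at times tt k, positions qq k;
   on [tt k, tt (k+1)] the particle moves with velocity ww k.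
   Node 0 is the initial (or injection) point, nodes 0 < k < tm are collisions,
   the last node is either an exit through an opening or the end of the
   observation window. *)
Record traj := Traj {
  tm : nat;
  tt : nat -> R;
  qq : nat -> pt R;
  ww : nat -> pt R
}.

(* outward (from Gamma) unit normal and unit tangent at q on dD *)
Definition en (q : pt R) : pt R := pscale (rD C)^-1 (psub dcen q).
Definition et (q : pt R) : pt R := rot90 (en q).

(* collision law at the disk, disk angular velocity om before the collision:
   (v^n)' = - v^n, (v^t)' = om *)
Definition disk_out (q v : pt R) (om : R) : pt R :=
  padd (pscale (- dot v (en q)) (en q)) (pscale om (et q)).

(* incoming tangential velocity: becomes the new angular velocity of the disk *)
Definition disk_vt (q v : pt R) : R := dot v (et q).

(* [ob tau om] : "just before time tau the disk has angular velocity om" *)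
Definition valid_traj (ob : R -> R -> Prop) (H : R) (x : traj) : Prop :=
  [/\ Gam (qq x 0),
      (forall k, (k < tm x)%N ->
         [/\ tt x k < tt x k.+1,
             qq x k.+1 = padd (qq x k) (pscale (tt x k.+1 - tt x k) (ww x k)) &
             forall s, tt x k < s < tt x k.+1 ->
               intGam (padd (qq x k) (pscale (s - tt x k) (ww x k)))]),
      (forall k, (0 < k < tm x)%N ->
         [/\ ~ corner (qq x k), ~ opening (qq x k) &
            (exists2 j, (j < nb C)%N /\ arck j (qq x k) &
               ww x k = refl (psub (qq x k) (cen C j)) (ww x k.-1))
            \/ (circD (qq x k) /\
                exists2 om, ob (tt x k) om & ww x k = disk_out (qq x k) (ww x k.-1) om)]),
      ((0 < tm x)%N /\ opening (qq x (tm x)) \/ tt x (tm x) = H) &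
      tt x (tm x) <= H].

Definition disk_event (N : nat) (xs : nat -> traj) (i k : nat) : Prop :=
  [/\ (i <= N)%N, (0 < k < tm (xs i))%N & circD (qq (xs i) k)].

Definition ev_time (xs : nat -> traj) (i k : nat) : R := tt (xs i) k.
Definition ev_vt (xs : nat -> traj) (i k : nat) : R :=
  disk_vt (qq (xs i) k) (ww (xs i) k.-1).

Definition omega_before (N : nat) (xs : nat -> traj) (om0 tau om : R) : Prop :=
  ((forall i k, disk_event N xs i k -> tau <= ev_time xs i k) /\ om = om0)
  \/ exists i k, [/\ disk_event N xs i k, ev_time xs i k < tau, om = ev_vt xs i k &
        forall i' k', disk_event N xs i' k' -> ev_time xs i' k' < tau ->
                      ev_time xs i' k' <= ev_time xs i k].

(* A valid evolution on [0, H] of the system made of particle 0 and the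
   particles 1..N injected from the baths, with initial disk angular
   velocity om0; no two collisions with the disk are simultaneous. *)
Definition valid_history (om0 H : R) (N : nat) (xs : nat -> traj) : Prop :=
  [/\ (forall i, (i <= N)%N -> valid_traj (omega_before N xs om0) H (xs i)) &
      (forall i k i' k', disk_event N xs i k -> disk_event N xs i' k' ->
         ev_time xs i k = ev_time xs i' k' -> i = i' /\ k = k')].

Definition injected (x : traj) : Prop :=
  0 <= tt x 0 /\
  ((openL (qq x 0) /\ 0 < (ww x 0).1) \/ (openR (qq x 0) /\ (ww x 0).1 < 0)).

Definition driver_ok (N : nat) (xs : nat -> traj) (i : nat) : Prop :=
  [/\ injected (xs i),
      (exists k, disk_event N xs i k /\
         forall k', disk_event N xs i k' -> k' = k),
      (0 < tm (xs i))%N & opening (qq (xs i) (tm (xs i)))].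

Definition follows (x : traj) (n : nat) (P : nat -> pt R) : Prop :=
  [/\ (n <= tm x)%N,
      (forall j, (j < n)%N -> qq x j = P j) &
      exists2 s : R, 0 <= s <= 1 & P n = lerp (qq x n.-1) (qq x n) s].

End CellDefs.

(* Main.v *)
Require Import Defs.
From HB Require Import structures.
From mathcomp Require Import all_boot all_order all_algebra.
From mathcomp Require Import all_classical all_reals all_analysis.
From mathcomp Require Import ring lra zify.
Import Order.TTheory GRing.Theory Num.Theory.
Local Open Scope ring_scope.
Local Open Scope classical_set_scope.
Import numFieldNormedType.Exports.

Lemma lerp_cont (R : realType) (p q : pt R) : continuous (lerp p q).
Proof.
move=> s.
have h1 : (fun t : R => p.1 + t * (q.1 - p.1) : R^o) @ s --> (p.1 + s * (q.1 - p.1) : R^o).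
  apply: cvgD; first exact: cvg_cst.
  by apply: cvgMl; exact: cvg_id.
have h2 : (fun t : R => p.2 + t * (q.2 - p.2) : R^o) @ s --> (p.2 + s * (q.2 - p.2) : R^o).
  apply: cvgD; first exact: cvg_cst.
  by apply: cvgMl; exact: cvg_id.
by have := cvg_pair h1 h2; move=> H; apply: H; exact: nbhs_filter.
Qed.

Lemma pairE (R : realType) (p : pt R) : (p.1, p.2) = p.
Proof. by case: p. Qed.

Lemma lerp0 (R : realType) (p q : pt R) : lerp p q 0 = p.
Proof. by rewrite /lerp /padd /pscale !mul0r !addr0; case: p. Qed.

Lemma lerp1 (R : realType) (p q : pt R) : lerp p q 1 = q.
Proof. by rewrite /lerp /padd /pscale /psub !mul1r; case: p; case: q => ? ? ? ? /=; congr pair; ring. Qed.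

Section Geo.
Variables (R : realType) (C : cell R).
Hypothesis hC : cell_ok C.

Lemma box_closed : closed (box C).
Proof. by case: hC => _ [] _ _ ? _. Qed.

Lemma bdry_box p : bdry (box C) p -> box C p.
Proof.
case=> + _; rewrite -(proj1 (closure_id _) box_closed); done.
Qed.

Lemma open_bdry p : opening C p -> bdry (box C) p.
Proof. by case: hC => _ _ [_ H] _ _ Hp; apply/H; left. Qed.

Lemma walls_bdry p : walls C p -> bdry (box C) p.
Proof. by case: hC => _ _ [_ H] _ _ Hp; apply/H; right. Qed.

Lemma cen_int : interior (box C) (dcen C).
Proof.
case: hC => [[_ r0]] _ _ _ [H _ _]; apply: H.
rewrite /diskD /dist2 /dot /psub /=; rewrite !subrr mul0r addr0.
by rewrite exprn_ge0 // ltW.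
Qed.

Lemma star z : bdry (box C) z -> forall s, 0 <= s < 1 -> interior (box C) (lerp (dcen C) z s).
Proof.
move=> bz s0 /andP[s00 s01].
have zc : z <> dcen C.
  by move=> E; case: bz => _; rewrite E; apply; exact: cen_int.
have key : forall t, 0 <= t < 1 -> box C (lerp (dcen C) z t) -> interior (box C) (lerp (dcen C) z t).
  move=> t /andP[t0 t1] bt; apply: contrapT => nt.
  have hb : bdry (box C) (lerp (dcen C) z t).
    split=> //; rewrite -(proj1 (closure_id _) box_closed); done.
  case: hC => _ _ _ _ [_ _ Hs].
  have := Hs z t bz; rewrite t0 (ltW t1) => /(_ isT hb) E.
  apply: zc; have E1 := congr1 fst E; have E2 := congr1 snd E.
  move: E1 E2; rewrite /lerp /padd /pscale /psub /= => E1 E2.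
  have t1' : 1 - t != 0 by rewrite subr_eq0 eq_sym lt_eqF.
  rewrite -[z]pairE -[dcen C]pairE; congr pair.
    rewrite /dcen /=.
    have : (1 - t) * (z.1 - cL C / 2) = z.1 - (cL C / 2 + t * (z.1 - cL C / 2)) by ring.
    rewrite E1 subrr => /eqP; rewrite mulf_eq0 (negbTE t1') subr_eq0 => /eqP //.
  rewrite /dcen /=.
  have : (1 - t) * (z.2 - 0) = z.2 - (0 + t * (z.2 - 0)) by ring.
  by rewrite E2 subrr => /eqP; rewrite mulf_eq0 (negbTE t1') subr_eq0 => /eqP.
pose A := `[0, s0] : set R.
pose B := A `&` (lerp (dcen C) z @^-1` interior (box C)).
have cA := @segment_connected R 0 s0.
have : B = A.
  apply: cA.
  - exists 0; split; first by rewrite /A /= in_itv /= lexx s00.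
    by rewrite /= lerp0; exact: cen_int.
  - exists (lerp (dcen C) z @^-1` interior (box C)) => //.
    apply: open_comp; last exact: open_interior.
    by move=> x _; apply: lerp_cont.
  - exists (lerp (dcen C) z @^-1` box C).
      apply: preimage_closed; last exact: box_closed.
      by move=> x _; apply: lerp_cont.
    apply/seteqP; split=> t [At Ht]; split=> //=.
      exact: interior_subset.
    apply: key => //; move: At; rewrite /A /= in_itv /= => /andP[-> ts].
    exact: le_lt_trans ts s01.
move=> E; have : A s0 by rewrite /A /= in_itv /= lexx s00.
by rewrite -E => -[].
Qed.


Local Notation L := (cL C).
Local Notation a := (ca C).
Local Notation r := (rD C).

Lemma a_pos : 0 < a. Proof. by case: hC => [[]]. Qed.
Lemma r_pos : 0 < r. Proof. by case: hC => [[]]. Qed.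

Lemma circ_nbdry p : circD C p -> ~ bdry (box C) p.
Proof.
move=> cp bp; case: hC => _ _ _ _ [_ E _].
by move/seteqP: E => [E _]; apply: (E p).
Qed.

Lemma corner_bdry p : corner C p -> bdry (box C) p.
Proof.
case=> [[h _]|[[h _]|[[h _]|[j [k [jn _ _ h _]]]]]].
- by apply: open_bdry; left.
- by apply: open_bdry; right.
- by apply: open_bdry; left.
- by apply: walls_bdry; exists j.
Qed.

Lemma r_lt : r < L / 2.
Proof.
have o : openL C (0, 0) by have := a_pos; split=> //=; apply/andP; split; lra.
have b0 : bdry (box C) (0, 0) by apply: open_bdry; left.
have d0 : diskD C (L / 2 - r, 0).
  by rewrite /diskD /dist2 /dot /psub /dcen /=; nra.
have : box C (L / 2 - r, 0).
  by case: hC => _ _ _ _ [H _ _]; apply: interior_subset; apply: H.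
case: hC => _ _ [H _] _ _ /H /= /andP[h _].
rewrite lt_neqAle -subr_ge0 h andbT; apply/negP => /eqP E.
have cd : circD C (0, 0).
  rewrite /circD /dist2 /dot /psub /dcen /= E; ring.
exact: (circ_nbdry _ cd b0).
Qed.

Definition ell := L / 2 - r.

Lemma ell_pos : 0 < ell.
Proof. by rewrite /ell subr_gt0 r_lt. Qed.

Lemma L_pos : 0 < L.
Proof. have := r_lt; have := r_pos; lra. Qed.

Lemma openL_gam y : `|y| <= a -> openL C (0, y) /\ Gam C (0, y).
Proof.
move=> ya; have o : openL C (0, y) by split=> //=; rewrite -ler_norml.
split=> //; split; first by apply: bdry_box; apply: open_bdry; left.
rewrite /dist2 /dot /psub /dcen /=.
have := r_lt; have := r_pos; nra.
Qed.

Lemma intG sig y : 0 < sig < 1 -> `|y| <= (1 - sig) * a -> intGam C (sig * ell, y).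
Proof.
move=> /andP[s0 s1] ya.
have Lp := L_pos; have ep := ell_pos; have rp := r_pos; have rl := r_lt; have ap := a_pos.
pose s := (L - 2 * sig * ell) / L.
have sp : 0 < s by rewrite /s divr_gt0 // /ell; nra.
have sa : (1 - sig) * a <= s * a.
  rewrite ler_pM2r // /s ler_pdivlMr //; rewrite /ell; nra.
have zo : openL C (0, y / s).
  split=> //=; rewrite -ler_norml normrM normfV (gtr0_norm sp) ler_pdivrMr //.
  by rewrite mulrC; apply: le_trans sa.
have E : lerp (dcen C) (0, y / s) s = (sig * ell, y).
  rewrite /lerp /padd /pscale /psub /dcen /s /=; congr pair; field.
    by rewrite lt0r_neq0.
  by rewrite lt0r_neq0 //; rewrite /ell; nra.
have I : interior (box C) (sig * ell, y).
  rewrite -E; apply: star; first by apply: open_bdry; left.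
  rewrite (ltW sp) /s ltr_pdivrMr // mul1r; rewrite /ell; nra.
have dd : r ^+ 2 < dist2 (sig * ell, y) (dcen C).
  have h1 : r < L / 2 - sig * ell by rewrite /ell in ep *; nra.
  rewrite /dist2 /dot /psub /dcen /=.
  have h2 : r ^+ 2 < (L / 2 - sig * ell) ^+ 2 by rewrite ltr_pXn2r // ?nnegrE; nra.
  have h3 : 0 <= (y - 0) * (y - 0) by nra.
  have -> : (sig * ell - L / 2) * (sig * ell - L / 2) = (L / 2 - sig * ell) ^+ 2 by ring.
  lra.
split; first by split; [exact: interior_subset | exact: ltW].
case=> [[_]|]; first by apply.
by rewrite /circD => h; move: dd; rewrite h ltxx.
Qed.

End Geo.
Arguments box_closed {R C}. Arguments bdry_box {R C}. Arguments open_bdry {R C}.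
Arguments walls_bdry {R C}. Arguments cen_int {R C}. Arguments star {R C}.
Arguments a_pos {R C}. Arguments r_pos {R C}. Arguments circ_nbdry {R C}.
Arguments corner_bdry {R C}. Arguments r_lt {R C}. Arguments ell {R}.
Arguments ell_pos {R C}. Arguments L_pos {R C}. Arguments openL_gam {R C}.
Arguments intG {R C}.

Lemma pscaleA (R : realType) (x y : R) (v : pt R) : pscale x (pscale y v) = pscale (x * y) v.
Proof. by rewrite /pscale /=; congr pair; ring. Qed.

Lemma refl_scale (R : realType) (nv w : pt R) (x : R) :
  refl nv (pscale x w) = pscale x (refl nv w).
Proof. by rewrite /refl /pscale /psub /dot /=; congr pair; ring. Qed.

Section Main.
Variables (R : realType) (C : cell R) (n : nat) (P : nat -> pt R) (lam om0 : R).
Hypotheses (hC : cell_ok C) (hA : admissible C n P) (hl : 0 < lam).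

Local Notation L := (cL C).
Local Notation a := (ca C).
Local Notation r := (rD C).
Local Notation c := (dcen C).

Definition dd j := psub (P j.+1) (P j).

Definition good j (x y : R) : Prop :=
  (exists2 k, (k < nb C)%N /\ arck C k (P j) &
      refl (psub (P j) (cen C k)) (pscale x (dd j.-1)) = pscale y (dd j))
  \/ (circD C (P j) /\
      disk_out C (P j) (pscale x (dd j.-1)) (y * dot (dd j) (et C (P j))) = pscale y (dd j)).

Fixpoint mu j := if j is j'.+1 then xget 1 [set y | 0 < y /\ good j'.+1 (mu j') y] else lam.

Lemma en_norm q : circD C q -> dot (en C q) (en C q) = 1.
Proof.
rewrite /circD /dist2 /en /dot /psub /pscale /= => E.
have r0 : r != 0 by rewrite lt0r_neq0 // r_pos.
have -> : r^-1 * (c.1 - q.1) * (r^-1 * (c.1 - q.1)) + r^-1 * (c.2 - q.2) * (r^-1 * (c.2 - q.2))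
   = r^-1 * r^-1 * ((q.1 - c.1) * (q.1 - c.1) + (q.2 - c.2) * (q.2 - c.2)) by ring.
by rewrite E; field.
Qed.

Lemma dot_en q v : dot v (en C q) = - r^-1 * dot v (psub q c).
Proof. by rewrite /dot /en /pscale /psub /=; ring. Qed.

Lemma out_sign q d : dist2 q c = r ^+ 2 ->
  (forall s, 0 < s < 1 -> r ^+ 2 <= dist2 (padd q (pscale s d)) c) ->
  dot d (psub q c) != 0 -> 0 < dot d (psub q c).
Proof.
move=> Eq Hs D0.
set D := dot d (psub q c).
have Np : 0 < dot d d.
  rewrite lt_neqAle; apply/andP; split; last by rewrite /dot; nra.
  apply/eqP => E0; move: D0; rewrite /D /dot.
  have h1 : d.1 * d.1 = 0 by move: E0; rewrite /dot; nra.
  have h2 : d.2 * d.2 = 0 by move: E0; rewrite /dot; nra.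
  move/eqP: h1; rewrite mulf_eq0 orbb => /eqP ->.
  move/eqP: h2; rewrite mulf_eq0 orbb => /eqP ->.
  by rewrite !mul0r addr0 eqxx.
rewrite lt_neqAle eq_sym D0 /=; rewrite leNgt; apply/negP => Dn.
set N := dot d d in Np.
pose s := - D / (N - 2 * D).
have den : 0 < N - 2 * D by lra.
have s0 : 0 < s by rewrite /s divr_gt0 // oppr_gt0.
have s1 : s < 1 by rewrite /s ltr_pdivrMr // mul1r; lra.
have := Hs s; rewrite s0 s1 => /(_ isT).
have -> : dist2 (padd q (pscale s d)) c = dist2 q c + s * (2 * D + s * N).
  by rewrite /dist2 /D /N /dot /padd /pscale /psub /=; ring.
have key : s * (2 * D + s * N) < 0.
  rewrite pmulr_rlt0 //.
  have -> : 2 * D + s * N = (D * N - 4 * D ^+ 2) / (N - 2 * D).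
    by rewrite /s; field; rewrite lt0r_neq0.
  rewrite pmulr_llt0 ?invr_gt0 //; nra.
rewrite Eq; lra.
Qed.


Lemma disk_eq q w d y : circD C q -> - dot w (en C q) = y * dot d (en C q) ->
  disk_out C q w (y * dot d (et C q)) = pscale y d.
Proof.
move=> cq E; have N := en_norm _ cq.
move: N; rewrite /disk_out E /et /rot90 /padd /pscale.
move: (en C q) => e N.
rewrite /dot /= in N *; congr pair.
  have -> : y * d.1 = y * d.1 * (e.1 * e.1 + e.2 * e.2) by rewrite N mulr1.
  ring.
have -> : y * d.2 = y * d.2 * (e.1 * e.1 + e.2 * e.2) by rewrite N mulr1.
ring.
Qed.

Lemma dd_pred j : (0 < j)%N -> dd j.-1 = psub (P j) (P j.-1).
Proof. by case: j. Qed.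

Lemma seg_int {j s} : (j < n)%N -> 0 < s < 1 -> intGam C (lerp (P j) (P j.+1) s).
Proof. by case: hA => _ H _ _ _ jn s01; apply: (proj2 (H j jn)). Qed.

Lemma seg_gam {j s} : (j < n)%N -> 0 < s < 1 -> r ^+ 2 <= dist2 (lerp (P j) (P j.+1) s) c.
Proof. by move=> jn s01; case: (seg_int jn s01) => -[]. Qed.

Lemma S1 {j} : (0 < j < n)%N -> circD C (P j) -> 0 < dot (dd j) (psub (P j) c).
Proof.
move=> /andP[j0 jn] cj; apply: out_sign => //.
  by move=> s s01; apply: (seg_gam jn s01).
by case: hA => _ _ _ _ /(_ j (ltnW jn) cj) [/(_ jn) ? _].
Qed.

Lemma S2 {j} : (0 < j < n)%N -> circD C (P j) -> dot (dd j.-1) (psub (P j) c) < 0.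
Proof.
move=> /andP[j0 jn] cj.
have E : forall v, dot (dd j.-1) v = - dot (psub (P j.-1) (P j)) v.
  by move=> v; rewrite dd_pred // /dot /psub /=; ring.
rewrite E oppr_lt0; apply: out_sign => //.
- move=> s /andP[s0 s1].
  have -> : padd (P j) (pscale s (psub (P j.-1) (P j))) = lerp (P j.-1) (P j.-1.+1) (1 - s).
    by rewrite prednK // /lerp /padd /pscale /psub /=; congr pair; ring.
  apply: seg_gam; first by lia.
  apply/andP; split; lra.
- case: hA => _ _ _ _ /(_ j (ltnW jn) cj) [_ /(_ j0)].
  move=> H; apply: contra H; rewrite -dd_pred //.
  have -> : dot (dd j.-1) (psub (P j) c) = - dot (psub (P j.-1) (P j)) (psub (P j) c) by apply: E.
  by move/eqP ->; rewrite oppr0.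
Qed.

Lemma good_ex {j} x : (0 < j < n)%N -> 0 < x -> exists y, 0 < y /\ good j x y.
Proof.
move=> /andP[j0 jn] x0.
have jj : (0 < j < n)%N by rewrite j0.
case: hA => _ _ [/(_ j jj) bd Hr] [/(_ j jj) nop _] _.
case: bd => [bj|cj].
  have [k [kn ak]] : exists k, (k < nb C)%N /\ arck C k (P j).
    case: hC => _ _ [_ /(_ (P j)) [/(_ bj) [//|[k ? ?]] _]] _ _.
    by exists k.
  have [l l0 El] := Hr j jj bj k kn ak.
  exists (x / l); split; first by rewrite divr_gt0.
  left; exists k => //.
  rewrite dd_pred // /dd El pscaleA refl_scale divfK //.
  by rewrite lt0r_neq0.
have p1 := S1 jj cj; have p2 := S2 jj cj.
have rp := r_pos hC.
have e1 : dot (dd j) (en C (P j)) < 0.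
  by rewrite dot_en mulNr oppr_lt0 mulr_gt0 // invr_gt0.
have e2 : 0 < dot (dd j.-1) (en C (P j)).
  by rewrite dot_en mulNr oppr_gt0 pmulr_rlt0 // invr_gt0.
exists (- x * dot (dd j.-1) (en C (P j)) / dot (dd j) (en C (P j))); split.
  have -> : - x * dot (dd j.-1) (en C (P j)) / dot (dd j) (en C (P j))
    = (x * dot (dd j.-1) (en C (P j))) / (- dot (dd j) (en C (P j))).
    by field; rewrite lt_eqF.
  by rewrite divr_gt0 ?mulr_gt0 // oppr_gt0.
right; split=> //; apply: disk_eq => //.
have -> : dot (pscale x (dd j.-1)) (en C (P j)) = x * dot (dd j.-1) (en C (P j)).
  by rewrite /dot /pscale /=; ring.
by field; rewrite lt_eqF.
Qed.

Lemma mu_pos j : 0 < mu j.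
Proof.
case: j => [//|j] /=.
have [[y Py]|ne] := pselect (exists y, [set y | 0 < y /\ good j.+1 (mu j) y] y).
  by case: (xgetPex 1 (ex_intro _ y Py)).
by rewrite xgetPN // => y Py; apply: ne; exists y.
Qed.

Lemma mu_good {j} : (0 < j < n)%N -> good j (mu j.-1) (mu j).
Proof.
case: j => [//|j] jn /=.
by case: (xgetPex 1 (good_ex (mu j) jn (mu_pos j))) => ? ?.
Qed.

Fixpoint T j := if j is j'.+1 then T j' + (mu j')^-1 else 0.
Definition w0 j := pscale (mu j) (dd j).
Definition tgt j := mu j * dot (dd j) (et C (P j)).
Definition vt0 j := disk_vt C (P j) (w0 j.-1).
Definition old i := match i with
  | 0 | 1 => om0
  | i'.+2 => if `[< circD C (P i'.+1) >] then vt0 i'.+1 else tgt i'.+1 end.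
Definition hh i := (mu i.-1)^-1.
Definition bt i := T i.-1 + hh i / 2.
Definition KK i := 1 + `|tgt i| + `|old i|.
Definition tau i := a * hh i / (4 * (a + hh i * KK i)).

Lemma hh_pos i : 0 < hh i.
Proof. by rewrite /hh invr_gt0 mu_pos. Qed.

Lemma T_S i : T i.+1 = T i + hh i.+1.
Proof. by []. Qed.

Lemma T_lt {j k} : (j < k)%N -> T j < T k.
Proof.
elim: k => [//|k IH]; rewrite ltnS leq_eqVlt => /orP[/eqP ->|jk].
  by rewrite T_S ltrDl hh_pos.
by rewrite T_S (lt_trans (IH jk)) // ltrDl hh_pos.
Qed.

Lemma T_le {j k} : (j <= k)%N -> T j <= T k.
Proof. by rewrite leq_eqVlt => /orP[/eqP ->//|/T_lt/ltW]. Qed.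

Lemma T_ge0 j : 0 <= T j.
Proof. by have := T_le (leq0n j). Qed.

Lemma KK_pos i : 0 < KK i.
Proof. by rewrite /KK; have := normr_ge0 (tgt i); have := normr_ge0 (old i); lra. Qed.

Lemma tau_pos i : 0 < tau i.
Proof.
have ap := a_pos hC; have hp := hh_pos i; have kp := KK_pos i.
by rewrite /tau divr_gt0 ?mulr_gt0 //; nra.
Qed.

Lemma tau_h i : tau i <= hh i / 4.
Proof.
have ap := a_pos hC; have hp := hh_pos i; have kp := KK_pos i.
rewrite /tau ler_pdivrMr; last nra.
rewrite mulrC mulrA -(mulrA _ _ 4) mulVf ?mulr1; last by apply/eqP; lra.
nra.
Qed.

Lemma tau_K (x : R) i : `|x| <= KK i -> tau i * `|x| <= a.
Proof.
move=> xK.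
have ap := a_pos hC; have hp := hh_pos i; have kp := KK_pos i.
have xp := normr_ge0 x.
have h1 : hh i * `|x| <= hh i * KK i by rewrite ler_pM2l.
have h2 : a * (hh i * `|x|) <= a * (hh i * KK i) by rewrite ler_pM2l.
have h3 : 0 <= a * (hh i * KK i) by rewrite !mulr_ge0 // ltW.
rewrite /tau mulrAC ler_pdivrMr; last nra.
rewrite -mulrA; nra.
Qed.

Lemma tau_tgt i : tau i * `|tgt i| <= a.
Proof. by apply: tau_K; rewrite /KK; have := normr_ge0 (old i); lra. Qed.

Lemma tau_old i : tau i * `|old i| <= a.
Proof. by apply: tau_K; rewrite /KK; have := normr_ge0 (tgt i); lra. Qed.

Lemma bt_lo {i} : (0 < i)%N -> T i.-1 < bt i - tau i.
Proof.
move=> _; have := tau_h i; have := hh_pos i; rewrite /bt; lra.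
Qed.

Lemma bt_hi {i} : (0 < i)%N -> bt i + tau i < T i.
Proof.
case: i => [//|i] _; have := tau_h i.+1; have := hh_pos i.+1; rewrite /bt T_S /=; lra.
Qed.

Lemma bt_lt {i} : (0 < i)%N -> T i.-1 < bt i /\ bt i < T i.
Proof.
move=> i0; have := bt_lo i0; have := bt_hi i0; have := tau_pos i; lra.
Qed.

Lemma ord1 {k i} : (0 < i)%N -> (k < i)%N -> T k < bt i.
Proof.
move=> i0 ki; apply: (le_lt_trans (T_le (_ : (k <= i.-1)%N))); first by lia.
by case: (bt_lt i0).
Qed.

Lemma ord2 {i k} : (0 < i)%N -> (i <= k)%N -> bt i < T k.
Proof.
move=> i0 ik; apply: (lt_le_trans _ (T_le ik)).
by case: (bt_lt i0).
Qed.

Lemma ord3 {i i'} : (0 < i)%N -> (i < i')%N -> bt i < bt i'.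
Proof.
move=> i0 ii; apply: (lt_trans (ord2 i0 (_ : (i <= i'.-1)%N))); first by lia.
by case: (bt_lt (_ : (0 < i')%N)) => //; lia.
Qed.

Definition q0 : pt R := (ell C, 0).

Definition drv i : traj R := Traj 2
  (fun k => match k with 0 => bt i - tau i | 1 => bt i | _ => bt i + tau i end)
  (fun k => match k with 0 => ((0 : R^o), - (tau i * tgt i)) | 1 => q0
                       | _ => ((0 : R^o), tau i * old i) end)
  (fun k => match k with 0 => ((ell C / tau i : R^o), tgt i)
                       | _ => ((- (ell C / tau i) : R^o), old i) end).

Definition x0 : traj R := Traj n T P w0.
Definition xs i := if i is 0 then x0 else drv i.

Lemma q0_circ : circD C q0.
Proof. by rewrite /circD /dist2 /dot /psub /q0 /ell /dcen /=; ring. Qed.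

Lemma en_q0 : en C q0 = (1, 0).
Proof.
have r0 : r != 0 by rewrite lt0r_neq0 // (r_pos hC).
by rewrite /en /pscale /psub /q0 /ell /dcen /=; congr pair; field.
Qed.

Lemma ev_char i k : disk_event C n.-1 xs i k ->
  (i = 0%N /\ (0 < k < n)%N /\ circD C (P k)) \/ ((0 < i <= n.-1)%N /\ k = 1%N).
Proof.
case: i => [|i] [iN kt ck]; first by left.
by right; split; [rewrite iN | move: kt => /=; lia].
Qed.

Definition slot i k := if i is 0 then (2 * k)%N else (2 * i).-1.

Lemma slot_time {i k i' k'} : disk_event C n.-1 xs i k -> disk_event C n.-1 xs i' k' ->
  (slot i k < slot i' k')%N -> ev_time xs i k < ev_time xs i' k'.
Proof.
move=> /ev_char [[-> [/andP[k0 kn] _]]|[/andP[i0 iN] ->]]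
        /ev_char [[-> [/andP[k0' kn'] _]]|[/andP[i0' iN'] ->]] /= sl.
- by apply: T_lt; lia.
- by move: i0' sl; case: i' {iN'} => //= i' _ sl; apply: ord1 => //; lia.
- by move: i0 sl; case: i {iN} => //= i _ sl; apply: ord2 => //; lia.
- by move: i0 i0' sl; case: i {iN} => // i; case: i' {iN'} => //= i' _ _ sl; apply: ord3 => //; lia.
Qed.

Lemma slot_inj {i k i' k'} : disk_event C n.-1 xs i k -> disk_event C n.-1 xs i' k' ->
  slot i k = slot i' k' -> i = i' /\ k = k'.
Proof.
move=> /ev_char [[-> [/andP[k0 kn] _]]|[/andP[i0 iN] ->]]
        /ev_char [[-> [/andP[k0' kn'] _]]|[/andP[i0' iN'] ->]] /= sl.
- by split=> //; lia.
- by move: i0' sl; case: i' {iN'} => //= i' _; lia.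
- by move: i0 sl; case: i {iN} => //= i _; lia.
- by move: i0 i0' sl; case: i {iN} => // i; case: i' {iN'} => //= i' _ _; split=> //; lia.
Qed.

Lemma time_slot {i k i' k'} : disk_event C n.-1 xs i k -> disk_event C n.-1 xs i' k' ->
  ev_time xs i k < ev_time xs i' k' -> (slot i k < slot i' k')%N.
Proof.
move=> e e' lt; rewrite ltnNge leq_eqVlt; apply/negP => /orP[/eqP E|L'].
  by have [? ?] := slot_inj e' e E; subst; rewrite ltxx in lt.
by have := slot_time e' e L'; rewrite ltNge (ltW lt).
Qed.

Lemma slot_le {i k i' k'} : disk_event C n.-1 xs i k -> disk_event C n.-1 xs i' k' ->
  (slot i k <= slot i' k')%N -> ev_time xs i k <= ev_time xs i' k'.
Proof.
move=> e e'; rewrite leq_eqVlt => /orP[/eqP E|L'].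
  by have [? ?] := slot_inj e e' E; subst.
exact/ltW/(slot_time e e' L').
Qed.

Lemma ev_vt_drv i : ev_vt C xs i.+1 1 = tgt i.+1.
Proof.
rewrite /ev_vt /= /disk_vt /et en_q0 /rot90 /dot /=; ring.
Qed.

Lemma ev_drv {i} : (0 < i <= n.-1)%N -> disk_event C n.-1 xs i 1.
Proof.
case: i => [//|i] /andP[_ iN]; split=> //=; exact: q0_circ.
Qed.

Lemma ev_p0 {j} : (0 < j < n)%N -> circD C (P j) -> disk_event C n.-1 xs 0 j.
Proof. by move=> jn cj; split. Qed.

Lemma ob_p0 j : (0 < j < n)%N -> circD C (P j) -> omega_before C n.-1 xs om0 (T j) (tgt j).
Proof.
move=> jn cj; right.
have ej : disk_event C n.-1 xs j 1 by apply: ev_drv; lia.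
have e0 := ev_p0 jn cj.
exists j, 1%N; split=> //.
- by case: j jn {cj ej e0} => [//|j] /= jn; case: (bt_lt (isT : (0 < j.+1)%N)).
- by case: j jn {cj ej e0} => [//|j] /= jn; rewrite ev_vt_drv.
- move=> i' k' e' lt.
  have : ev_time xs i' k' < ev_time xs 0 j by [].
  move/(time_slot e' e0) => sl.
  apply: (slot_le e' ej); move: sl; rewrite /=; move: jn; clear; case: j => [//|j] _ /=; lia.
Qed.

Lemma slot_ge1 {i k} : disk_event C n.-1 xs i k -> (1 <= slot i k)%N.
Proof.
move/ev_char=> [[-> [/andP[k0 _] _]]|[/andP[i0 _] ->]] /=; first lia.
by case: i i0 => //= i _; lia.
Qed.

Lemma ob_drv i : (0 < i <= n.-1)%N -> omega_before C n.-1 xs om0 (bt i) (old i).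
Proof.
move=> iN.
have ei := ev_drv iN.
have Ti : bt i = ev_time xs i 1 by case: i iN {ei} => [//|i].
case: i iN ei Ti => [//|[|i]] iN ei Ti.
  left; split=> // i' k' e'; rewrite Ti; apply: (slot_le ei e').
  by have := slot_ge1 e'.
right.
have [cP|ncP] := asboolP (circD C (P i.+1)).
  have e0 : disk_event C n.-1 xs 0 i.+1 by apply: ev_p0 => //; lia.
  exists 0%N, i.+1; split=> //.
  - by rewrite Ti; apply: (slot_time e0 ei) => /=; lia.
  - by rewrite /old; case: asboolP.
  - move=> i' k' e' lt; rewrite Ti in lt.
    have sl := time_slot e' ei lt.
    by apply: (slot_le e' e0); move: sl => /=; lia.
have e0 : disk_event C n.-1 xs i.+1 1 by apply: ev_drv; lia.
exists i.+1, 1%N; split=> //.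
- by rewrite Ti; apply: (slot_time e0 ei) => /=; lia.
- by rewrite ev_vt_drv /old; case: asboolP.
- move=> i' k' e' lt; rewrite Ti in lt.
  have sl := time_slot e' ei lt.
  apply: (slot_le e' e0); move: sl => /=.
  move/ev_char: (e') => [[-> [_ ck]]|[/andP[i0 _] ->]] /=.
    have : k' <> i.+1 by move=> E; apply: ncP; rewrite -E.
    lia.
  by case: i' i0 {e' lt} => //= i' _; lia.
Qed.

Local Notation ob := (omega_before C n.-1 xs om0).

Lemma vt_x0 : valid_traj C ob (T n) x0.
Proof.
case: (hA) => [[n0 Pg]] _ [_ _] [nop nco] _.
rewrite /x0; split; cbn [tt qq ww tm] => //.
- by apply: Pg.
- move=> k kn; have mp := mu_pos k.
  have mk : mu k != 0 by rewrite lt0r_neq0.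
  have Td : T k.+1 - T k = (mu k)^-1 by rewrite T_S /hh /=; ring.
  split.
  + by rewrite T_S ltrDl hh_pos.
  + by rewrite Td /w0 pscaleA mulVf // -(@lerp1 R (P k) (P k.+1)).
  + move=> s /andP[s1 s2].
    rewrite /w0 pscaleA; apply: seg_int => //.
    rewrite T_S /hh /= in s2.
    apply/andP; split; first by rewrite mulr_gt0 // subr_gt0.
    rewrite -ltr_pdivlMr // div1r; lra.
- move=> k kn; split; [apply: nco; lia | exact: nop |].
  case: (mu_good kn) => [[kk kP E]|[cj E]].
    by left; exists kk.
  by right; split=> //; exists (tgt k) => //; apply: ob_p0.
- by right.
Qed.

Lemma ntau i : tau i != 0.
Proof. by rewrite lt0r_neq0 // tau_pos. Qed.

Lemma vt_drv i : (0 < i <= n.-1)%N -> valid_traj C ob (T n) (drv i).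
Proof.
move=> iN.
have tp := tau_pos i; have nt := ntau i; have ep := ell_pos hC.
have ta := tau_tgt i; have to := tau_old i.
have ntg : `|- (tau i * tgt i)| <= a by rewrite normrN normrM gtr0_norm.
have nto : `|tau i * old i| <= a by rewrite normrM gtr0_norm.
split=> /=.
- by case: (openL_gam hC _ ntg).
- case=> [|[|k]] // _; split.
  + lra.
  + by rewrite /q0 /padd /pscale /=; congr pair; field.
  + move=> s /andP[s1 s2].
    pose sig := (s - (bt i - tau i)) / tau i.
    have sg0 : 0 < sig by rewrite divr_gt0 // subr_gt0.
    have sg1 : sig < 1 by rewrite ltr_pdivrMr // mul1r; lra.
    have -> : padd ((0 : R^o), - (tau i * tgt i)) (pscale (s - (bt i - tau i)) ((ell C / tau i : R^o), tgt i))
            = (sig * ell C, - ((1 - sig) * (tau i * tgt i))).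
      by rewrite /padd /pscale /sig /=; congr pair; field.
    apply: intG => //; first by rewrite sg0.
    rewrite normrN normrM (ger0_norm (_ : 0 <= 1 - sig)); last lra.
    by apply: ler_wpM2l; [lra | rewrite -normrN].
  + lra.
  + by rewrite /q0 /padd /pscale /=; congr pair; field.
  + move=> s /andP[s1 s2].
    pose sig := 1 - (s - bt i) / tau i.
    have u0 : 0 < (s - bt i) / tau i by rewrite divr_gt0 // subr_gt0.
    have u1 : (s - bt i) / tau i < 1 by rewrite ltr_pdivrMr // mul1r; lra.
    have -> : padd q0 (pscale (s - bt i) ((- (ell C / tau i) : R^o), old i))
            = (sig * ell C, (1 - sig) * (tau i * old i)).
      by rewrite /padd /pscale /sig /q0 /=; congr pair; field.
    apply: intG => //; first by apply/andP; split; rewrite /sig; lra.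
    rewrite normrM (ger0_norm (_ : 0 <= 1 - sig)); last by rewrite /sig; lra.
    by apply: ler_wpM2l => //; rewrite /sig; lra.
- case=> [|[|k]] // _; split.
  + by move/(corner_bdry hC); apply: (circ_nbdry hC _ q0_circ).
  + by move/(open_bdry hC); apply: (circ_nbdry hC _ q0_circ).
  + right; split; first exact: q0_circ.
    exists (old i); first exact: ob_drv.
    rewrite /disk_out /et en_q0 /rot90 /padd /pscale /dot /=; congr pair; ring.
- left; split=> //; left; by case: (openL_gam hC _ nto).
- apply/ltW; apply: (lt_le_trans (bt_hi (_ : (0 < i)%N))); first by lia.
  by apply: T_le; lia.
Qed.

Lemma drv_ok i : (0 < i <= n.-1)%N -> driver_ok C n.-1 xs i.
Proof.
move=> iN.
have i0 : (0 < i)%N by lia.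
case: i iN i0 => [//|i] iN i0.
have tp := tau_pos i.+1; have ep := ell_pos hC; have ta := tau_tgt i.+1; have to := tau_old i.+1.
have ntg : `|- (tau i.+1 * tgt i.+1)| <= a by rewrite normrN normrM gtr0_norm.
have nto : `|tau i.+1 * old i.+1| <= a by rewrite normrM gtr0_norm.
split=> /=.
- split=> /=.
    have := bt_lo i0; have := T_ge0 i; rewrite /=; lra.
  left; split; first by case: (openL_gam hC _ ntg).
  by rewrite divr_gt0.
- exists 1%N; split; first exact: ev_drv.
  by move=> k' [_ /= kk _]; lia.
- by [].
- by left; case: (openL_gam hC _ nto).
Qed.

Lemma vh : valid_history C om0 (T n) n.-1 xs.
Proof.
split.
  case=> [|i] iN; first exact: vt_x0.
  by apply: vt_drv; rewrite iN.
move=> i k i' k' e e' E.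
apply: (slot_inj e e'); apply/eqP; rewrite eqn_leq; apply/andP; split.
  by rewrite leqNgt; apply/negP => /(slot_time e' e); rewrite E ltxx.
by rewrite leqNgt; apply/negP => /(slot_time e e'); rewrite E ltxx.
Qed.

End Main.

Theorem proposition1 (R : realType) (C : cell R) (n : nat) (P : nat -> pt R)
    (v0 : pt R) (om0 : R) :
  cell_ok C -> admissible C n P ->
  (exists2 lam : R, 0 < lam & v0 = pscale lam (psub (P 1%N) (P 0%N))) ->
  exists (N : nat) (xs : nat -> traj R) (H : R),
    [/\ valid_history C om0 H N xs,
        (* particle 0 starts at time 0 from gamma(0) with velocity v0 *)
        [/\ tt (xs 0%N) 0 = 0, qq (xs 0%N) 0 = P 0%N & ww (xs 0%N) 0 = v0],
        (* particles 1..N are drivers *)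
        (forall i, (0 < i <= N)%N -> driver_ok C N xs i),
        (* particle 0 follows gamma to its end (in the finite time <= H) *)
        follows (xs 0%N) n P &
        (* in particular, it leaves the cell if gamma(1) is in an opening *)
        (opening C (P n) ->
           tm (xs 0%N) = n /\ qq (xs 0%N) n = P n)].
Proof.
move=> hC hA [lam hl ->].
exists n.-1, (@xs R C n P lam om0), (@T R C P lam n); split.
- exact: vh.
- by [].
- by move=> i iN; apply: drv_ok.
- split=> //=; exists 1; first by rewrite ler01 lexx.
  by rewrite lerp1.
- by [].
Qed.
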